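(* Consider estimation of the open-loop scalar system $\dot X(t)=aX(t)$, $a>0$, with random initial state $|X(0)|<L$, over the timing channel described in the context. If there exists $\Gamma_0>1$ such that along the sequence of estimation times $t_n=\Gamma_0\,\mathbb{E}(\mathcal{T}_n)$ the estimates satisfy $|X(t_n)-\hat X(t_n)|\to0$ in probability as $n\to\infty$, then there is an estimator with $|X(t)-\hat X(t)|\to0$ in probability as $t\to\infty$.
   Context: Timing channel: symbols from a one-element alphabet; initialized with a symbol received at time $0$; after the acknowledgment of the $i$-th reception the sender waits $W_{i+1}\ge0$ and transmits the next symbol, received after a random delay $S_{i+1}\ge0$; the $W_i$ are i.i.d. (random codebook), the $S_i$ are i.i.d. and independent of the $W_i$; $D_i=W_i+S_i$, $\mathcal{T}_n=\sum_{i=1}^nD_i$. The estimator at time $t$ uses the inter-reception times of all symbols received up to time $t$, $L$ and the dynamics. *)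

(* Defs.v *)
From HB Require Import structures.
From mathcomp Require Import all_boot all_order all_algebra.
From mathcomp Require Import all_classical all_reals all_analysis.
Set Implicit Arguments. Unset Strict Implicit. Unset Printing Implicit Defensive.
Import Order.TTheory GRing.Theory Num.Theory.
Import numFieldNormedType.Exports.
Local Open Scope classical_set_scope.
Local Open Scope ring_scope.

Section defs.
Context {d : measure_display} {T : measurableType d} {R : realType}.
Variable P : probability T R.

Definition iid_seq (X : nat -> T -> R) : Prop :=
  [/\ (forall i, measurable_fun setT (X i)),
      (forall i (B : set R), measurable B -> P (X i @^-1` B) = P (X 0%N @^-1` B)) &
      (forall (s : seq nat) (B : nat -> set R), uniq s ->
         (forall i, measurable (B i)) ->
         P (\bigcap_(i in [set` s]) (X i @^-1` B i)) =
         (\big[*%E/1%E]_(i <- s) P (X i @^-1` B i))%E)].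

Definition indep_seqs (X Y : nat -> T -> R) : Prop :=
  forall (s1 s2 : seq nat) (A B : nat -> set R),
    (forall i, measurable (A i)) -> (forall i, measurable (B i)) ->
    P ((\bigcap_(i in [set` s1]) (X i @^-1` A i)) `&`
       (\bigcap_(j in [set` s2]) (Y j @^-1` B j))) =
    (P (\bigcap_(i in [set` s1]) (X i @^-1` A i)) *
     P (\bigcap_(j in [set` s2]) (Y j @^-1` B j)))%E.

Definition cvg_prob0 {I : Type} (F : set_system I) (Y : I -> T -> R) : Prop :=
  forall eps : R, 0 < eps ->
    (fun k => P [set w | eps <= `|Y k w|]) @ F --> 0%E.

End defs.

(* Timing channel.  Symbol i+1 (i : nat) has waiting time W i and delay S i;
   D i = W i + S i is the (i+1)-th inter-reception time. *)
Definition Dtime {T : Type} {R : realType} (W S : nat -> T -> R) (i : nat) (w : T) : R :=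
  W i w + S i w.

(* calT n = D_1 + ... + D_n : reception time of the n-th symbol. *)
Definition calT {T : Type} {R : realType} (W S : nat -> T -> R) (n : nat) (w : T) : R :=
  \sum_(i < n) Dtime W S i w.

(* Information available to the estimator at time t: the inter-reception
   times of all symbols received up to time t (Some D_{i+1} if symbol i+1 has
   been received by time t, None otherwise). *)
Definition obs {T : Type} {R : realType} (W S : nat -> T -> R) (t : R) (w : T)
  : nat -> option R :=
  fun i => if calT W S i.+1 w <= t then Some (Dtime W S i w) else None.

Definition estimator_ok {d : measure_display} {T : measurableType d} {R : realType}
  (W S : nat -> T -> R) (Xh : R -> (nat -> option R) -> R) : Prop :=
  forall t : R, measurable_fun setT (fun w => Xh t (obs W S t w)).

Definition state {T : Type} {R : realType} (a : R) (X0 : T -> R) (t : R) (w : T) : R :=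
  expR (a * t) * X0 w.

(* Main.v *)
Require Import Defs.
From HB Require Import structures.
From mathcomp Require Import all_boot all_order all_algebra.
From mathcomp Require Import all_classical all_reals all_analysis.
From mathcomp Require Import measurable_realfun.
Import Order.TTheory GRing.Theory Num.Theory.
Import archimedean.Num.Theory.
Import numFieldNormedType.Exports.
Local Open Scope classical_set_scope.
Local Open Scope ring_scope.

Lemma int_same_law (d : measure_display) (T : measurableType d) (R : realType)
  (P : probability T R) (X Y : T -> R) :
  measurable_fun setT X -> measurable_fun setT Y ->
  (forall w, 0 <= X w) -> (forall w, 0 <= Y w) ->
  (forall B : set R, measurable B -> P (X @^-1` B) = P (Y @^-1` B)) ->
  (\int[P]_w (X w)%:E = \int[P]_w (Y w)%:E)%E.
Proof.
move=> mX mY X0 Y0 XY.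
pose f := EFin \o (fun y : R => `|y|).
have mf : measurable_fun [set: R] f.
  by apply: measurableT_comp => //; exact: normr_measurable.
have h (Z : T -> R) : measurable_fun setT Z -> (forall w, 0 <= Z w) ->
   (\int[P]_w (Z w)%:E = \int[pushforward P Z]_(y in setT) f y)%E.
  move=> mZ Z0; rewrite (@ge0_integral_pushforward _ _ _ _ _ Z mZ P setT f) //.
    by apply: eq_integral => w _ /=; rewrite /f /= ger0_norm.
  by move=> y _; rewrite lee_fin.
rewrite (h X) // (h Y) //.
by apply: eq_measure_integral => A mA _; apply: XY.
Qed.

Lemma calTS {T : Type} {R : realType} (W S : nat -> T -> R) n w :
  calT W S n.+1 w = calT W S n w + Dtime W S n w.
Proof. by rewrite /calT big_ord_recr. Qed.

Lemma calT0 {T : Type} {R : realType} (W S : nat -> T -> R) w :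
  calT W S 0 w = 0.
Proof. by rewrite /calT big_ord0. Qed.

Lemma calT_meas (d : measure_display) (T : measurableType d) (R : realType)
  (W S : nat -> T -> R) n :
  (forall i, measurable_fun setT (W i)) -> (forall i, measurable_fun setT (S i)) ->
  measurable_fun setT (calT W S n).
Proof.
move=> mW mS; elim: n => [|n IH].
  have -> : calT W S 0 = cst 0 by apply: funext => w; rewrite calT0.
  exact: measurable_cst.
have -> : calT W S n.+1 = calT W S n \+ Dtime W S n.
  by apply: funext => w; rewrite calTS.
apply: measurable_funD => //; exact: measurable_funD.
Qed.

Lemma calT_ge0 {T : Type} {R : realType} (W S : nat -> T -> R) n w :
  (forall i w, 0 <= W i w) -> (forall i w, 0 <= S i w) -> 0 <= calT W S n w.
Proof.
move=> W0 S0; apply: sumr_ge0 => i _; apply: addr_ge0; [exact: W0|exact: S0].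
Qed.

Lemma calT_mono {T : Type} {R : realType} (W S : nat -> T -> R) m n w :
  (forall i w, 0 <= W i w) -> (forall i w, 0 <= S i w) -> (m <= n)%N ->
  calT W S m w <= calT W S n w.
Proof.
move=> W0 S0; elim: n => [|n IH]; first by rewrite leqn0 => /eqP ->.
rewrite leq_eqVlt => /orP[/eqP ->//|]; rewrite ltnS => /IH h.
rewrite calTS; apply: (le_trans h); rewrite lerDl.
apply: addr_ge0; [exact: W0|exact: S0].
Qed.

Lemma int_calT (d : measure_display) (T : measurableType d) (R : realType)
  (P : probability T R) (W S : nat -> T -> R) n :
  (forall i w, 0 <= W i w) -> (forall i w, 0 <= S i w) ->
  iid_seq P W -> iid_seq P S ->
  (\int[P]_w (calT W S n w)%:E = n%:R%:E * \int[P]_w (Dtime W S 0 w)%:E)%E.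
Proof.
move=> W0 S0 [mW dW _] [mS dS _].
have mE (f : T -> R) : measurable_fun setT f -> measurable_fun setT (EFin \o f).
  by move=> mf; apply: measurableT_comp.
have D0 i w : 0 <= Dtime W S i w by apply: addr_ge0; [exact: W0|exact: S0].
have hD i : (\int[P]_w (Dtime W S i w)%:E = \int[P]_w (Dtime W S 0 w)%:E)%E.
  rewrite /Dtime.
  under eq_integral do rewrite EFinD.
  under [RHS]eq_integral do rewrite EFinD.
  rewrite ge0_integralD //; first last.
  - exact: mE.
  - by move=> x _; rewrite lee_fin.
  - exact: mE.
  - by move=> x _; rewrite lee_fin.
  rewrite [RHS]ge0_integralD //; first last.
  - exact: mE.
  - by move=> x _; rewrite lee_fin.
  - exact: mE.
  - by move=> x _; rewrite lee_fin.
  by rewrite (@int_same_law _ _ _ P _ _ (mW i) (mW 0) (W0 i) (W0 0) (dW i))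
             (@int_same_law _ _ _ P _ _ (mS i) (mS 0) (S0 i) (S0 0) (dS i)).
elim: n => [|n IH].
  under eq_integral do rewrite calT0.
  by rewrite integral0 mul0e.
under eq_integral do rewrite calTS EFinD.
rewrite ge0_integralD //; first last.
- by apply: mE; apply: measurable_funD.
- by move=> x _; rewrite lee_fin.
- by apply: mE; apply: calT_meas.
- by move=> x _; rewrite lee_fin; apply: calT_ge0.
rewrite IH hD -natr1 EFinD ge0_muleDl ?lee_fin // mul1e //.
Qed.

Definition recon {R : realType} (s : R) (o : nat -> option R) : nat -> option R :=
  fun i => match o i with
           | Some x => if \sum_(j < i.+1) odflt 0 (o j) <= s then Some x else None
           | None => None end.

Lemma recon_obs {T : Type} {R : realType} (W S : nat -> T -> R) (s t : R) w :
  (forall i w, 0 <= W i w) -> (forall i w, 0 <= S i w) -> s <= t ->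
  recon s (obs W S t w) = obs W S s w.
Proof.
move=> W0 S0 st; apply: funext => i; rewrite /recon /obs.
case: ifP => hi.
  have -> : \sum_(j < i.+1) odflt 0 (if calT W S j.+1 w <= t then Some (Dtime W S j w) else None)
      = calT W S i.+1 w.
    rewrite /calT; apply: eq_bigr => j _.
    have -> : calT W S j.+1 w <= t.
      apply: le_trans hi; apply: calT_mono => //.
    by [].
  by [].
case: ifP => // hs.
by move: hi; rewrite (le_trans hs st).
Qed.

Lemma fine_mulE {R : realType} (x : R) (y : \bar R) : 0 <= x -> (0 <= y)%E ->
  fine (x%:E * y)%E = x * fine y.
Proof.
move=> x0; case: y => [r| |] _ //=.
have [->|xp] := eqVneq x 0; first by rewrite mul0e mul0r.
by rewrite gt0_muley ?mulr0 // lte_fin lt_neqAle eq_sym xp.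
Qed.

Lemma mset (d : measure_display) (T : measurableType d) (R : realType)
  (f : T -> R) : measurable_fun setT f -> forall e : R, measurable [set w | e <= `|f w|].
Proof.
move=> mf e.
have -> : [set w | e <= `|f w|] = setT `&` ((fun w => `|f w|) @^-1` `[e, +oo[%classic).
  rewrite setTI; apply/seteqP; split => w /=; rewrite in_itv /= andbT //.
have m := measurableT_comp (@normr_measurable R setT) mf.
exact: (m measurableT _ (measurable_itv _)).
Qed.

Theorem lemma2 (d : measure_display) (T : measurableType d) (R : realType)
  (P : probability T R) (a L : R) (X0 : T -> R) (W S : nat -> T -> R)
  (Xh0 : R -> (nat -> option R) -> R) (Gamma0 : R) :
  0 < a ->
  measurable_fun setT X0 -> (forall w, `|X0 w| < L) ->
  (forall i w, 0 <= W i w) -> (forall i w, 0 <= S i w) ->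
  iid_seq P W -> iid_seq P S -> indep_seqs P S W ->
  (forall i, P.-integrable setT (EFin \o W i)) ->
  (forall i, P.-integrable setT (EFin \o S i)) ->
  estimator_ok W S Xh0 ->
  1 < Gamma0 ->
  let tn := fun n : nat => Gamma0 * fine (\int[P]_w (calT W S n w)%:E) in
  cvg_prob0 P \oo
    (fun n w => state a X0 (tn n) w - Xh0 (tn n) (obs W S (tn n) w)) ->
  exists Xh : R -> (nat -> option R) -> R,
    estimator_ok W S Xh /\
    cvg_prob0 P (+oo : set_system R)
      (fun t w => state a X0 t w - Xh t (obs W S t w)).
Proof.
move=> a0 mX0 X0L W0 S0 iW iS _ _ _ eok G1 tn hconv.
pose I := (\int[P]_w (Dtime W S 0 w)%:E)%E.
have I0 : (0 <= I)%E.
  by apply: integral_ge0 => w _; rewrite lee_fin addr_ge0.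
pose c := fine I.
have c0 : 0 <= c by apply: fine_ge0.
pose B := Gamma0 * c.
have B0 : 0 <= B by apply: mulr_ge0 => //; apply: ltW; apply: lt_trans G1.
have Htn n : tn n = n%:R * B.
  rewrite /tn (@int_calT _ _ _ P) // fine_mulE // /B /c -/I; by rewrite mulrCA.
pose k := fun t : R => Num.truncn (t / B).
have Hk t : 0 <= t -> tn (k t) <= t.
  move=> t0; rewrite Htn.
  have [Bz|Bp] := eqVneq B 0; first by rewrite Bz mulr0.
  have Bp' : 0 < B by rewrite lt_neqAle eq_sym Bp.
  rewrite -ler_pdivlMr //; rewrite truncn_le; exact: divr_ge0.
have Hk2 t : 0 <= t -> 0 < B -> t - tn (k t) <= B.
  move=> t0 Bp; rewrite Htn lerBlDl.
  have : t <= (k t).+1%:R * B by rewrite -ler_pdivrMr //; exact: ltW (truncnS_gt _).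
  by rewrite -natr1 mulrDl mul1r addrC.
pose err := fun s w => state a X0 s w - Xh0 s (obs W S s w).
have merr s : measurable_fun setT (err s).
  apply: measurable_funB; last exact: eok.
  by apply: measurable_funM => //; exact: measurable_cst.
pose Xh := fun t o => if tn (k t) <= t then
   expR (a * (t - tn (k t))) * Xh0 (tn (k t)) (recon (tn (k t)) o) else 0.
have Herr t w : tn (k t) <= t ->
   state a X0 t w - Xh t (obs W S t w) = expR (a * (t - tn (k t))) * err (tn (k t)) w.
  move=> h; rewrite /Xh h recon_obs // /err /state /=.
  have -> : expR (a * t) = expR (a * (t - tn (k t))) * expR (a * tn (k t)).
    by rewrite -expRD -mulrDr subrK.
  set e := expR (a * (t - tn (k t))).
  by rewrite mulrBr !mulrA.
have hok : estimator_ok W S Xh.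
  move=> t; have [h|h] := boolP (tn (k t) <= t); last first.
    have -> : (fun w => Xh t (obs W S t w)) = cst 0.
      by apply: funext => w; rewrite /Xh (negbTE h).
    exact: measurable_cst.
  have -> : (fun w => Xh t (obs W S t w)) =
     (fun w => expR (a * (t - tn (k t))) * Xh0 (tn (k t)) (obs W S (tn (k t)) w)).
    by apply: funext => w; rewrite /Xh h recon_obs.
  by apply: measurable_funM; [exact: measurable_cst | exact: eok].
exists Xh; split => // eps eps0.
have mY t : measurable_fun setT (fun w => state a X0 t w - Xh t (obs W S t w)).
  apply: measurable_funB; last exact: hok.
  by apply: measurable_funM => //; exact: measurable_cst.
have incl t delta : tn (k t) <= t -> delta * expR (a * (t - tn (k t))) <= eps ->
  (P [set w | (eps <= `|state a X0 t w - Xh t (obs W S t w)|)%R] <=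
   P [set w | (delta <= `|err (tn (k t)) w|)%R])%E.
  move=> h hd; apply: le_measure; rewrite ?inE; [exact: mset|exact: mset|].
  move=> w /=; rewrite Herr // normrM gtr0_norm ?expR_gt0 // => he.
  rewrite -(ler_pM2r (expR_gt0 (a * (t - tn (k t))))).
  by apply: (le_trans hd); rewrite mulrC.
have [Bp|Bz] := ltP 0 B.
  pose delta := eps * expR (- (a * B)).
  have dp : 0 < delta by apply: mulr_gt0 => //; exact: expR_gt0.
  pose g := fun n => P [set w | delta <= `|err (tn n) w|].
  have hg : g @ \oo --> 0%E := hconv delta dp.
  have hk : k @ +oo --> \oo.
    apply/cvgnyPge => N; near=> t.
    rewrite truncn_ge_nat; last by apply: divr_ge0 => //; near: t; apply: nbhs_pinfty_ge; exact: num_real.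
    rewrite ler_pdivlMr //; near: t; apply: nbhs_pinfty_ge; exact: num_real.
  apply: (@squeeze_cvge _ _ _ _ (cst 0%E) _ (g \o k)); last 2 first.
  - exact: cvg_cst.
  - exact: cvg_comp hk hg.
  near=> t; apply/andP; split; first exact: measure_ge0.
  have t0 : 0 <= t by near: t; apply: nbhs_pinfty_ge; exact: num_real.
  apply: incl; first exact: Hk.
  rewrite /delta -mulrA -expRD; rewrite -[leRHS]mulr1; apply: ler_wpM2l; first exact: ltW.
  rewrite -expR0 ler_expR addrC subr_le0; apply: ler_wpM2l; first exact: ltW.
  exact: Hk2.
have Bz' : B = 0 by apply/le_anti; rewrite Bz B0.
have tn0 n : tn n = 0 by rewrite Htn Bz' mulr0.
have hz delta : 0 < delta -> P [set w | delta <= `|err 0 w|] = 0%E.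
  move=> dp; have := hconv delta dp.
  have -> : (fun n => P [set w | delta <= `|state a X0 (tn n) w - Xh0 (tn n) (obs W S (tn n) w)|])
       = cst (P [set w | delta <= `|err 0 w|]).
    by apply: funext => n; rewrite /cst tn0.
  move=> h.
  by rewrite -(cvg_lim (@ereal_hausdorff R) h) lim_cst.
apply: (@squeeze_cvge _ _ _ _ (cst 0%E) _ (cst 0%E)); last 2 first.
- exact: cvg_cst.
- exact: cvg_cst.
near=> t; apply/andP; split; first exact: measure_ge0.
have t0 : 0 <= t by near: t; apply: nbhs_pinfty_ge; exact: num_real.
rewrite /cst -(hz (eps * expR (- (a * t)))); last by apply: mulr_gt0 => //; exact: expR_gt0.
rewrite -(tn0 (k t)); apply: incl; first exact: Hk.
by rewrite tn0 subr0 -mulrA -expRD addNr expR0 mulr1.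
Unshelve. all: end_near.
Qed.
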